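(* For every $m\in\mathbb{Q}$ with $m\notin\{0,1,-1\}$, consider the tetrahedron in $\mathbb{R}^3$ with vertices \begin{align*} P_1&=(0,0,0),\qquad P_2=\big(10(m^4-1)(m^4+3m^2+1),\,0,\,0\big),\\ P_3&=\Big(\tfrac{2(m^2-1)(m^2+4)(3m^2+2)^2}{5},\ \tfrac{(m^2+4)(2m^2+3)(3m^2+2)(4m^2+1)}{5},\ 0\Big),\\ P_4&=\Big(\tfrac{2(m^2-1)(2m^2+3)^2(4m^2+1)}{5},\ -\tfrac{(2m^2+3)(2m^2-5m-2)(2m^2+5m-2)(3m^2+2)}{5},\ 4(m^2-1)m(2m^2+3)(3m^2+2)\Big). \end{align*} Then its four faces are congruent triangles (opposite edges have equal length), and all six edge lengths, all four face areas, and the volume of this tetrahedron are rational numbers.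
   Context: No further context is needed. *)

(* Defs.v *)
From Stdlib Require Import Reals QArith Qreals.
Open Scope R_scope.

Definition pt := (R * R * R)%type.
Definition mkpt (x y z : R) : pt := (x, y, z).
Definition px (p : pt) : R := fst (fst p).
Definition py (p : pt) : R := snd (fst p).
Definition pz (p : pt) : R := snd p.

Definition vsub (p q : pt) : pt := mkpt (px p - px q) (py p - py q) (pz p - pz q).
Definition dot (u v : pt) : R := px u * px v + py u * py v + pz u * pz v.
Definition cross (u v : pt) : pt :=
  mkpt (py u * pz v - pz u * py v)
       (pz u * px v - px u * pz v)
       (px u * py v - py u * px v).
Definition det3 (u v w : pt) : R := dot u (cross v w).

Definition edge_len (p q : pt) : R := sqrt (dot (vsub p q) (vsub p q)).
Definition tri_area (p q r : pt) : R :=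
  sqrt (dot (cross (vsub q p) (vsub r p)) (cross (vsub q p) (vsub r p))) / 2.
Definition tet_volume (p1 p2 p3 p4 : pt) : R :=
  Rabs (det3 (vsub p2 p1) (vsub p3 p1) (vsub p4 p1)) / 6.

Definition is_rational (x : R) : Prop := exists q : Q, x = Q2R q.

Definition P1 (m : R) : pt := mkpt 0 0 0.
Definition P2 (m : R) : pt :=
  mkpt (10 * (m^4 - 1) * (m^4 + 3*m^2 + 1)) 0 0.
Definition P3 (m : R) : pt :=
  mkpt (2 * (m^2 - 1) * (m^2 + 4) * (3*m^2 + 2)^2 / 5)
       ((m^2 + 4) * (2*m^2 + 3) * (3*m^2 + 2) * (4*m^2 + 1) / 5)
       0.
Definition P4 (m : R) : pt :=
  mkpt (2 * (m^2 - 1) * (2*m^2 + 3)^2 * (4*m^2 + 1) / 5)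
       (- ((2*m^2 + 3) * (2*m^2 - 5*m - 2) * (2*m^2 + 5*m - 2) * (3*m^2 + 2)) / 5)
       (4 * (m^2 - 1) * m * (2*m^2 + 3) * (3*m^2 + 2)).

(* Main.v *)
Require Import Defs.
From Stdlib Require Import Reals QArith Qreals Lra.
Open Scope R_scope.

Lemma rat_Q2R q : is_rational (Q2R q).
Proof. exists q; reflexivity. Qed.

Lemma rat_IZR z : is_rational (IZR z).
Proof. exists (inject_Z z). unfold Q2R; simpl. rewrite Rinv_1. ring. Qed.

Lemma rat_plus x y : is_rational x -> is_rational y -> is_rational (x + y).
Proof. intros [a ->] [b ->]. exists (a + b)%Q. now rewrite Q2R_plus. Qed.

Lemma rat_mult x y : is_rational x -> is_rational y -> is_rational (x * y).
Proof. intros [a ->] [b ->]. exists (a * b)%Q. now rewrite Q2R_mult. Qed.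

Lemma rat_opp x : is_rational x -> is_rational (- x).
Proof. intros [a ->]. exists (- a)%Q. now rewrite Q2R_opp. Qed.

Lemma rat_pow x n : is_rational x -> is_rational (x ^ n).
Proof. intros H; induction n; simpl. apply (rat_IZR 1). now apply rat_mult. Qed.

Lemma rat_divp x p : is_rational x -> is_rational (x / IZR (Zpos p)).
Proof. intros [a ->]. exists (a * (1 # p))%Q. rewrite Q2R_mult. unfold Rdiv. f_equal.
  unfold Q2R; simpl. ring. Qed.

Lemma rat_abs x : is_rational x -> is_rational (Rabs x).
Proof. intros H. unfold Rabs. destruct (Rcase_abs x). now apply rat_opp. exact H. Qed.

Ltac rat := repeat first [ assumption | apply rat_IZR | apply rat_abs | apply rat_divp
  | apply rat_pow | apply rat_opp | apply rat_plus | apply rat_mult ].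

Lemma sqrt_sq x : sqrt (x ^ 2) = Rabs x.
Proof. rewrite <- Rsqr_pow2. apply sqrt_Rsqr_abs. Qed.

Ltac unf := unfold det3, tet_volume; unfold P1, P2, P3, P4, vsub, dot, cross, det3, px, py, pz, mkpt; simpl.

Section S.
Variable m : R.
Definition SE1 := (-10)*m^0 + (-30)*m^2 + (30)*m^6 + (10)*m^8.
Definition SE2 := (8)*m^0 + (30)*m^2 + (47)*m^4 + (34)*m^6 + (6)*m^8.
Definition SE3 := (6)*m^0 + (34)*m^2 + (47)*m^4 + (30)*m^6 + (8)*m^8.
Definition SA := (-48)*m^0 + (-452)*m^2 + (-1462)*m^4 + (-1778)*m^6 + (1778)*m^10 + (1462)*m^12 + (452)*m^14 + (48)*m^16.
End S.

Lemma e12 m : edge_len (P1 m) (P2 m) = Rabs (SE1 m).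
Proof. unfold edge_len. rewrite <- sqrt_sq. f_equal. unfold SE1; unf. field. Qed.
Lemma e34 m : edge_len (P3 m) (P4 m) = Rabs (SE1 m).
Proof. unfold edge_len. rewrite <- sqrt_sq. f_equal. unfold SE1; unf. field. Qed.
Lemma e13 m : edge_len (P1 m) (P3 m) = Rabs (SE2 m).
Proof. unfold edge_len. rewrite <- sqrt_sq. f_equal. unfold SE2; unf. field. Qed.
Lemma e24 m : edge_len (P2 m) (P4 m) = Rabs (SE2 m).
Proof. unfold edge_len. rewrite <- sqrt_sq. f_equal. unfold SE2; unf. field. Qed.
Lemma e14 m : edge_len (P1 m) (P4 m) = Rabs (SE3 m).
Proof. unfold edge_len. rewrite <- sqrt_sq. f_equal. unfold SE3; unf. field. Qed.
Lemma e23 m : edge_len (P2 m) (P3 m) = Rabs (SE3 m).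
Proof. unfold edge_len. rewrite <- sqrt_sq. f_equal. unfold SE3; unf. field. Qed.

Lemma a123 m : tri_area (P1 m) (P2 m) (P3 m) = Rabs (SA m) / 2.
Proof. unfold tri_area. rewrite <- sqrt_sq. do 2 f_equal. unfold SA; unf. field. Qed.
Lemma a124 m : tri_area (P1 m) (P2 m) (P4 m) = Rabs (SA m) / 2.
Proof. unfold tri_area. rewrite <- sqrt_sq. do 2 f_equal. unfold SA; unf. field. Qed.
Lemma a134 m : tri_area (P1 m) (P3 m) (P4 m) = Rabs (SA m) / 2.
Proof. unfold tri_area. rewrite <- sqrt_sq. do 2 f_equal. unfold SA; unf. field. Qed.
Lemma a234 m : tri_area (P2 m) (P3 m) (P4 m) = Rabs (SA m) / 2.
Proof. unfold tri_area. rewrite <- sqrt_sq. do 2 f_equal. unfold SA; unf. field. Qed.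

Definition VD m := 10 * (m^4 - 1) * (m^4 + 3*m^2 + 1) *
  ((m^2 + 4) * (2*m^2 + 3) * (3*m^2 + 2) * (4*m^2 + 1) / 5) *
  (4 * (m^2 - 1) * m * (2*m^2 + 3) * (3*m^2 + 2)).

Lemma vol m : tet_volume (P1 m) (P2 m) (P3 m) (P4 m) = Rabs (VD m) / 6.
Proof. unfold tet_volume. do 2 f_equal. unfold VD; unf. field. Qed.

Lemma VD_nz m : m <> 0 -> m <> 1 -> m <> -1 -> VD m <> 0.
Proof.
  intros h0 h1 h2. unfold VD.
  assert (hm2 : m^2 - 1 <> 0).
  { replace (m^2 - 1) with ((m - 1) * (m + 1)) by ring.
    apply Rmult_integral_contrapositive_currified; lra. }
  assert (hm4 : m^4 - 1 <> 0).
  { replace (m^4 - 1) with ((m^2 - 1) * (m^2 + 1)) by ring.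
    apply Rmult_integral_contrapositive_currified; [exact hm2|nra]. }
  assert (0 <= m^2) by nra.
  assert (0 <= m^4) by (replace (m^4) with ((m^2)^2) by ring; nra).
  repeat apply Rmult_integral_contrapositive_currified; try lra; try assumption.
  all: unfold Rdiv; repeat apply Rmult_integral_contrapositive_currified; try lra.
  all: apply Rinv_neq_0_compat; lra.
Qed.

Theorem mainTheorem9 (q : Q) :
  let m := Q2R q in
  m <> 0 -> m <> 1 -> m <> -1 ->
  let A := P1 m in let B := P2 m in let C := P3 m in let D := P4 m in
  (* a genuine (non-degenerate) tetrahedron *)
  0 < tet_volume A B C D /\
  (* opposite edges have equal length (so the four faces are congruent) *)
  edge_len A B = edge_len C D /\ edge_len A C = edge_len B D /\ edge_len A D = edge_len B C /\
  (* all six edge lengths are rational *)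
  is_rational (edge_len A B) /\ is_rational (edge_len A C) /\ is_rational (edge_len A D) /\
  is_rational (edge_len B C) /\ is_rational (edge_len B D) /\ is_rational (edge_len C D) /\
  (* all four face areas are rational *)
  is_rational (tri_area A B C) /\ is_rational (tri_area A B D) /\
  is_rational (tri_area A C D) /\ is_rational (tri_area B C D) /\
  (* the volume is rational *)
  is_rational (tet_volume A B C D).
Proof.
  intros m h0 h1 h2 A B C D.
  assert (Hm : is_rational m) by apply rat_Q2R.
  unfold A, B, C, D.
  rewrite vol, e12, e34, e13, e24, e14, e23, a123, a124, a134, a234.
  split.
  { apply Rmult_lt_0_compat; [apply Rabs_pos_lt, VD_nz; assumption | lra]. }
  repeat split; try reflexivity; unfold SE1, SE2, SE3, SA, VD; rat.
Qed.
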